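(* Let $p$ be an odd prime, $n\ge 2$, $N$ a positive integer, and $(\mathbf J,\mathbf B,\mathbf C)\in\mathbb{Z}_p^{n(n-1)/2+2n}$. Then $$Z_n(\mathbf J,\mathbf B,\mathbf C;p)=C_n'\,Z_{n-1}(\mathbf J',\mathbf B^+,\mathbf C^+;p)+B_n'\,Z_{n-1}(\mathbf J',\mathbf B^-,\mathbf C^-;p)$$ in $\mathbb{Z}_p$, where $\mathbf J'\in\mathbb{Z}_p^{(n-1)(n-2)/2}$ has $J'_{ij}=J_{ij}$ for $1\le i<j\le n-1$; $\mathbf B^\pm,\mathbf C^\pm\in\mathbb{Z}_p^{n-1}$ are given for $1\le i\le n-1$ by $B^+_i=2^{-N}B_iJ_{in}$, $B^-_i=B_i$, $C^+_i=C_i$, $C^-_i=2^{-N}C_iJ_{in}$; and $C_n'=C_n2^{(n-2)N}$, $B_n'=B_n2^{(n-2)N}$.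
   Context: All arithmetic is in $\mathbb{Z}_p$, and $2^{-N}$ denotes $g^N$ where $g$ is the multiplicative inverse of $2$ modulo $p$. For $m\ge1$ and $\boldsymbol\sigma\in\{-1,1\}^m$, let $I_m(\boldsymbol\sigma)=|\{(i,j):1\le i<j\le m,\ \sigma_i\ne\sigma_j\}|$ and $f(m,\boldsymbol\sigma)=\frac{m(m-1)}{2}-m-I_m(\boldsymbol\sigma)$. For an input $(\mathbf J,\mathbf B,\mathbf C)$ with $\mathbf J=(J_{ij}:1\le i<j\le m)$, $\mathbf B=(B_i)_{i\le m}$, $\mathbf C=(C_i)_{i\le m}$, define $$Z_m(\mathbf J,\mathbf B,\mathbf C;p)=\sum_{\boldsymbol\sigma\in\{-1,1\}^m}2^{Nf(m,\boldsymbol\sigma)}\Big(\prod_{i:\sigma_i=-1}B_i\Big)\Big(\prod_{i:\sigma_i=+1}C_i\Big)\Big(\prod_{i<j:\sigma_i\ne\sigma_j}J_{ij}\Big)\pmod p,$$ with powers of $2$ (possibly negative exponents) interpreted in $\mathbb{Z}_p$. *)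

(* Defs.v *)
From HB Require Import structures.
From mathcomp Require Import all_boot all_order all_algebra.
Set Implicit Arguments. Unset Strict Implicit. Unset Printing Implicit Defensive.
Import Order.TTheory GRing.Theory Num.Theory.
Local Open Scope ring_scope.

(* Spin configurations sigma in {-1,1}^m are encoded as {ffun 'I_m -> bool},
   with true = +1 and false = -1. Site i : 'I_m is the paper's index i+1.
   Inputs J, B, C are 1-indexed families (J i j used for 1 <= i < j <= m). *)

Definition Icount (m : nat) (s : {ffun 'I_m -> bool}) : nat :=
  #|[set ij : 'I_m * 'I_m | (ij.1 < ij.2)%N && (s ij.1 != s ij.2)]|.

Definition fexp (m : nat) (s : {ffun 'I_m -> bool}) : int :=
  ((m * (m - 1)) %/ 2)%:Z - m%:Z - (Icount s)%:Z.

Definition Zpart (R : unitRingType) (m N : nat)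
  (J : nat -> nat -> R) (B C : nat -> R) : R :=
  \sum_(s : {ffun 'I_m -> bool})
     (2 : R) ^ (N%:Z * fexp s)
     * (\prod_(i : 'I_m | ~~ s i) B i.+1)
     * (\prod_(i : 'I_m | s i) C i.+1)
     * (\prod_(ij : 'I_m * 'I_m | (ij.1 < ij.2)%N && (s ij.1 != s ij.2))
          J ij.1.+1 ij.2.+1).

(* Main.v *)
Require Import Defs.
From HB Require Import structures.
From mathcomp Require Import all_boot all_order all_algebra.
Import Order.TTheory GRing.Theory Num.Theory.
Local Open Scope ring_scope.
From mathcomp Require Import zify ring.

Lemma pair_split (R:Type) (idx:R) (op : Monoid.com_law idx) m
  (P : 'I_m.+1 -> 'I_m.+1 -> bool) (F : 'I_m.+1 -> 'I_m.+1 -> R) :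
 \big[op/idx]_(ij : 'I_m.+1 * 'I_m.+1 | (ij.1 < ij.2)%N && P ij.1 ij.2) F ij.1 ij.2 =
 op (\big[op/idx]_(ij : 'I_m * 'I_m | (ij.1 < ij.2)%N &&
        P (widen_ord (leqnSn m) ij.1) (widen_ord (leqnSn m) ij.2))
        F (widen_ord (leqnSn m) ij.1) (widen_ord (leqnSn m) ij.2))
    (\big[op/idx]_(i < m | P (widen_ord (leqnSn m) i) ord_max)
        F (widen_ord (leqnSn m) i) ord_max).
Proof.
have E k (Q : 'I_k -> 'I_k -> bool) (G : 'I_k -> 'I_k -> R) :
  \big[op/idx]_(ij : 'I_k*'I_k | Q ij.1 ij.2) G ij.1 ij.2 =
  \big[op/idx]_i \big[op/idx]_j (if Q i j then G i j else idx).
  by rewrite pair_bigA big_mkcond.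
rewrite (E _ (fun i j => (i < j)%N && P i j) (fun i j => F i j)).
rewrite (E _ (fun i j : 'I_m => (i < j)%N && P (widen_ord (leqnSn m) i) (widen_ord (leqnSn m) j)) (fun i j => F (widen_ord (leqnSn m) i) (widen_ord (leqnSn m) j))).
rewrite big_ord_recr /=.
rewrite [X in op _ X]big1 ?Monoid.mulm1; last first.
  by move=> j _; rewrite ltnNge -ltnS ltn_ord.
under eq_bigr => i _ do rewrite big_ord_recr /=.
rewrite big_split /= [in RHS]big_mkcond /=.
congr (op _ _); rewrite [in RHS]big_mkcond; apply: eq_bigr => i _; by rewrite ltn_ord.
Qed.

Definition ext {m} (b : bool) (t : {ffun 'I_m -> bool}) : {ffun 'I_m.+1 -> bool} :=
  [ffun i => if unlift ord_max i is Some j then t j else b].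

Lemma ext_max m b (t : {ffun 'I_m -> bool}) : ext b t ord_max = b.
Proof. by rewrite /ext ffunE unlift_none. Qed.

Lemma widen_lift m (j : 'I_m) : widen_ord (leqnSn m) j = lift ord_max j.
Proof. by apply: val_inj => /=; rewrite /bump leqNgt ltn_ord. Qed.

Lemma ext_widen m b (t : {ffun 'I_m -> bool}) j : ext b t (widen_ord (leqnSn m) j) = t j.
Proof. by rewrite widen_lift /ext ffunE liftK. Qed.

Lemma sum_ext (R : nmodType) m (F : {ffun 'I_m.+1 -> bool} -> R) :
  \sum_(s : {ffun 'I_m.+1 -> bool}) F s =
  \sum_(b : bool) \sum_(t : {ffun 'I_m -> bool}) F (ext b t).
Proof.
rewrite pair_bigA /=.
pose h := fun p : bool * {ffun 'I_m -> bool} => ext p.1 p.2.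
pose hi := fun s : {ffun 'I_m.+1 -> bool} =>
  (s ord_max, [ffun j => s (widen_ord (leqnSn m) j)]).
rewrite (reindex h) //; exists hi => [[b t] _ | s _].
  rewrite /hi /h /= ext_max; congr pair; apply/ffunP => j.
  by rewrite ffunE ext_widen.
rewrite /hi /h /=; apply/ffunP => i; rewrite /ext ffunE.
case: unliftP => [j ->|->] //.
by rewrite ffunE widen_lift.
Qed.

Lemma Icount_ext m b (t : {ffun 'I_m -> bool}) :
  Icount (ext b t) = (Icount t + \sum_(i < m | t i != b) 1)%N.
Proof.
rewrite /Icount -!sum1dep_card.
rewrite (@pair_split _ _ _ m (fun i j => ext b t i != ext b t j) (fun _ _ => 1%N)) /=.
congr addn.
  by apply: eq_bigl => ij; rewrite !ext_widen.
by apply: eq_bigl => i; rewrite ext_widen ext_max.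
Qed.
Lemma halfS m : ((m.+1 * (m.+1 - 1)) %/ 2 = (m * (m - 1)) %/ 2 + m)%N.
Proof.
have -> : (m.+1 * (m.+1 - 1) = m * (m - 1) + m * 2)%N.
  case: m => //= m'; rewrite subn1 /= subn1 /=. nia.
by rewrite divnDr ?dvdn_mull // mulnK.
Qed.
Lemma fexp_ext m b (t : {ffun 'I_m -> bool}) : (0 < m)%N ->
  fexp (ext b t) = fexp t + (m - 1)%N%:Z - (\sum_(i < m | t i != b) 1)%N%:Z.
Proof.
move=> m0; rewrite /fexp Icount_ext halfS.
lia.
Qed.

Lemma prod_ext (R : comNzRingType) m (P : bool -> bool) (F : nat -> R) b
  (t : {ffun 'I_m -> bool}) :
  \prod_(i < m.+1 | P (ext b t i)) F i.+1 =
  (\prod_(i < m | P (t i)) F i.+1) * (if P b then F m.+1 else 1).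
Proof.
rewrite big_mkcond big_ord_recr /= ext_max [in RHS]big_mkcond /=.
by congr (_ * _); apply: eq_bigr => i _; rewrite ext_widen.
Qed.

Lemma prod_const_sum (R : comNzRingType) I (r : seq I) (P : pred I) (c : R) :
  \prod_(i <- r | P i) c = c ^+ (\sum_(i <- r | P i) 1)%N.
Proof.
rewrite (big_morph (fun n => c ^+ n) (exprD c) (expr0 c)).
by apply: eq_bigr => i _; rewrite expr1.
Qed.

Lemma term_ext (R : fieldType) m N (J : nat -> nat -> R) (B C : nat -> R) b
  (t : {ffun 'I_m -> bool}) : (2 : R) != 0 -> (0 < m)%N ->
  (2 : R) ^ (N%:Z * fexp (ext b t))
     * (\prod_(i : 'I_m.+1 | ~~ ext b t i) B i.+1)
     * (\prod_(i : 'I_m.+1 | ext b t i) C i.+1)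
     * (\prod_(ij : 'I_m.+1 * 'I_m.+1 | (ij.1 < ij.2)%N && (ext b t ij.1 != ext b t ij.2))
          J ij.1.+1 ij.2.+1)
  = (if b then C m.+1 else B m.+1) * 2 ^+ ((m - 1) * N) *
    ((2 : R) ^ (N%:Z * fexp t)
     * (\prod_(i : 'I_m | ~~ t i) (if b then (fun i => (2 : R)^-1 ^+ N * B i * J i m.+1) else B) i.+1)
     * (\prod_(i : 'I_m | t i) (if b then C else (fun i => (2 : R)^-1 ^+ N * C i * J i m.+1)) i.+1)
     * (\prod_(ij : 'I_m * 'I_m | (ij.1 < ij.2)%N && (t ij.1 != t ij.2))
          J ij.1.+1 ij.2.+1)).
Proof.
move=> two0 m0; set g := (2 : R)^-1.
set k := (\sum_(i < m | t i != b) 1)%N.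
have E2 : (2 : R) ^ (N%:Z * fexp (ext b t)) =
    2 ^ (N%:Z * fexp t) * 2 ^+ ((m - 1) * N) * g ^+ (N * k).
  rewrite fexp_ext // (_ : N%:Z * _ = N%:Z * fexp t + ((m - 1) * N)%N%:Z + - (N * k)%N%:Z); last first.
    rewrite !PoszM; ring.
  by rewrite !expfzDr // -exprnN -exprnP /g exprVn.
rewrite E2 (@prod_ext _ m negb) (@prod_ext _ m id).
rewrite (@pair_split _ _ _ m (fun i j => ext b t i != ext b t j) (fun i j => J i.+1 j.+1)) /=.
have -> : \prod_(ij : 'I_m * 'I_m | (ij.1 < ij.2)%N &&
    (ext b t (widen_ord (leqnSn m) ij.1) != ext b t (widen_ord (leqnSn m) ij.2)))
    J ij.1.+1 ij.2.+1 =
  \prod_(ij : 'I_m * 'I_m | (ij.1 < ij.2)%N && (t ij.1 != t ij.2)) J ij.1.+1 ij.2.+1.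
  by apply: eq_bigl => ij; rewrite !ext_widen.
have -> : \prod_(i < m | ext b t (widen_ord (leqnSn m) i) != ext b t ord_max) J i.+1 m.+1 =
  \prod_(i < m | t i != b) J i.+1 m.+1.
  by apply: eq_bigl => i; rewrite ext_widen ext_max.
rewrite /k; clear E2 k; case: b => /=.
  rewrite !big_split /= prod_const_sum -exprM.
  have -> : \prod_(i < m | ~~ t i) J i.+1 m.+1 = \prod_(i < m | t i != true) J i.+1 m.+1.
    by apply: eq_bigl => i; case: (t i).
  have -> : (\sum_(i < m | ~~ t i) 1)%N = (\sum_(i < m | t i != true) 1)%N.
    by apply: eq_bigl => i; case: (t i).
  ring.
rewrite !big_split /= prod_const_sum -exprM.
have -> : \prod_(i < m | t i) J i.+1 m.+1 = \prod_(i < m | t i != false) J i.+1 m.+1.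
  by apply: eq_bigl => i; case: (t i).
have -> : (\sum_(i < m | t i) 1)%N = (\sum_(i < m | t i != false) 1)%N.
  by apply: eq_bigl => i; case: (t i).
ring.
Qed.
Theorem lemma1 (p : nat) (Hp : prime p) (Hodd : odd p) (n N : nat)
  (Hn : (2 <= n)%N) (HN : (0 < N)%N)
  (J : nat -> nat -> 'F_p) (B C : nat -> 'F_p) :
  let g : 'F_p := (2 : 'F_p)^-1 in
  let J' := fun i j => J i j in
  let Bp := fun i => g ^+ N * B i * J i n in
  let Bm := fun i => B i in
  let Cp := fun i => C i in
  let Cm := fun i => g ^+ N * C i * J i n in
  let Cn' := C n * 2 ^+ ((n - 2) * N) in
  let Bn' := B n * 2 ^+ ((n - 2) * N) in
  Zpart n N J B C =
    Cn' * Zpart n.-1 N J' Bp Cp + Bn' * Zpart n.-1 N J' Bm Cm.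
Proof.
have two0 : (2 : 'F_p) != 0.
  rewrite -(dvdn_pcharf (pchar_Fp Hp)); apply/negP => /dvdn_leq /= H.
  have E : p = 2%N by apply/eqP; rewrite eqn_leq H; move: (prime_gt1 Hp).
  by move: Hodd; rewrite E.
case: n Hn => [|[|m]] // _ /=.
rewrite /Zpart sum_ext big_bool /= !mulr_sumr.
congr (_ + _); apply: eq_bigr => t _; rewrite term_ext //.
Qed.
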